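(* Let $s\geq 2$ be an integer. Among the complete graphs $K_m$ with $m\geq s+2$, there are exactly $s-1$ for which there exists a function $g:A\to B$ with $|g(A)|=s$ and $fix(K_m)=fix(F_{K_m})$; namely these are $K_{s+2},K_{s+3},\dots,K_{2s}$.
   Context: A set $S\subseteq V(H)$ is a fixing set of a graph $H$ if the only automorphism of $H$ fixing every vertex of $S$ is the identity; $fix(H)$ is the minimum cardinality of a fixing set of $H$. Functigraph: let $G_1,G_2$ be disjoint copies of a connected graph $G$, with $A=V(G_1)$, $B=V(G_2)$, and let $g:A\to B$ be a function. The functigraph $F_G$ has vertex set $A\cup B$ and edge set $E(G_1)\cup E(G_2)\cup\{ug(u):u\in A\}$. *)

(* Defs.v *)
From mathcomp Require Import all_boot all_fingroup.
Set Implicit Arguments. Unset Strict Implicit. Unset Printing Implicit Defensive.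

Definition is_aut (T : finType) (e : rel T) (p : {perm T}) : bool :=
  [forall x, forall y, e (p x) (p y) == e x y].

Definition fixing_set (T : finType) (e : rel T) (S : {set T}) : bool :=
  [forall p : {perm T}, (is_aut e p && [forall x in S, p x == x]) ==> (p == 1%g)].

Definition has_fixing_set_of_size (T : finType) (e : rel T) (n : nat) : bool :=
  [exists S : {set T}, (#|S| == n) && fixing_set e S].

Lemma has_fixing_set_ex (T : finType) (e : rel T) :
  exists n, has_fixing_set_of_size e n.
Proof.
exists #|[set: T]|; apply/existsP; exists [set: T]; rewrite eqxx /=.
apply/forallP => p; apply/implyP => /andP [_ /forallP H].
apply/eqP/permP => x; rewrite perm1; exact/eqP/(implyP (H x))/in_setT.
Qed.

Definition fixnum (T : finType) (e : rel T) : nat := ex_minn (has_fixing_set_ex e).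

Definition complete_graph (m : nat) : rel 'I_m := fun x y => x != y.

(* The functigraph F_G: vertex set A + B with A = inl (copy G_1), B = inr
   (copy G_2); edges: those of G_1, those of G_2, and u -- g(u) for u in A. *)
Definition functigraph (T : finType) (e : rel T) (g : T -> T) : rel (T + T) :=
  fun x y => match x, y with
  | inl a, inl b => e a b
  | inr a, inr b => e a b
  | inl a, inr b => g a == b
  | inr b, inl a => g a == b
  end.

Arguments complete_graph m : clear implicits.

(* Main.v *)
Require Import Defs.
From mathcomp Require Import all_boot all_fingroup zify.
Set Implicit Arguments. Unset Strict Implicit. Unset Printing Implicit Defensive.

Lemma fixnum_le (T : finType) (e : rel T) (S : {set T}) :
  fixing_set e S -> fixnum e <= #|S|.
Proof.
move=> HS; rewrite /fixnum; case: ex_minnP => n _ H; apply: H.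
by apply/existsP; exists S; rewrite eqxx HS.
Qed.

Lemma fixnum_wit (T : finType) (e : rel T) :
  exists2 S : {set T}, fixing_set e S & #|S| = fixnum e.
Proof.
rewrite /fixnum; case: ex_minnP => n /existsP [S /andP [/eqP <- HS]] _.
by exists S.
Qed.

Lemma moved (T : finType) (e : rel T) (S : {set T}) (p : {perm T}) :
  fixing_set e S -> is_aut e p -> p != 1%g -> exists2 x, x \in S & p x != x.
Proof.
move=> /forallP /(_ p) H Ha Hp.
case: (boolP [exists x in S, p x != x]) => [/existsP [x /andP [? ?]]|Hn].
  by exists x.
exfalso; move: H; rewrite Ha /= (negbTE Hp) implybF => /negP; apply.
apply/forallP => x; apply/implyP => xS; move: Hn => /existsP Hn.
by apply/negPn/negP => Hx; apply: Hn; exists x; rewrite xS.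
Qed.

Lemma tperm_in (T : finType) (e : rel T) (S : {set T}) (x y : T) :
  fixing_set e S -> is_aut e (tperm x y) -> x != y -> (x \in S) || (y \in S).
Proof.
move=> HS Ha Hxy.
have Hp : tperm x y != 1%g.
  by apply/eqP => /permP /(_ x); rewrite tpermL perm1 => /eqP; rewrite eq_sym (negbTE Hxy).
case: (moved HS Ha Hp) => z zS.
case: tpermP => [Ez|Ez|_ _]; last by rewrite eqxx.
- by rewrite -Ez zS.
- by rewrite -Ez zS orbT.
Qed.

Definition sumf (T : finType) (p q : {perm T}) (x : T + T) : T + T :=
  match x with inl a => inl (p a) | inr b => inr (q b) end.

Lemma sumf_inj (T : finType) (p q : {perm T}) : injective (sumf p q).
Proof.
by case=> [a|a] [b|b] //= [] /perm_inj ->.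
Qed.

Definition psum (T : finType) (p q : {perm T}) : {perm (T + T)} := perm (@sumf_inj T p q).

Lemma aut_sum (T : finType) (e : rel T) (g : T -> T) (p q : {perm T}) :
  (forall x y, e (p x) (p y) = e x y) -> (forall x y, e (q x) (q y) = e x y) ->
  (forall a, g (p a) = q (g a)) -> is_aut (functigraph e g) (psum p q).
Proof.
move=> Hp Hq Hg; apply/forallP => x; apply/forallP => y; rewrite !permE.
case: x => [a|a]; case: y => [b|b] /=; rewrite ?Hp ?Hq ?Hg //;
  by rewrite (inj_eq perm_inj).
Qed.

Lemma aut_K (m : nat) (p : {perm 'I_m}) x y :
  complete_graph m (p x) (p y) = complete_graph m x y.
Proof. by rewrite /complete_graph (inj_eq perm_inj). Qed.

Lemma card_lt (m n : nat) : n <= m -> #|[set x : 'I_m | x < n]| = n.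
Proof.
move=> nm.
have -> : [set x : 'I_m | x < n] = [set widen_ord nm x | x in [set: 'I_n]].
  apply/setP => x; rewrite inE; apply/idP/imsetP.
    move=> xn; by exists (Ordinal xn); rewrite ?inE //; apply: val_inj.
  by case=> y _ ->; rewrite /= ltn_ord.
by rewrite card_imset ?cardsT ?card_ord //; by move=> a b /(congr1 val) /= ab; apply: val_inj.
Qed.

Section Km.
Variable m : nat.
Local Notation K := (complete_graph m).

Lemma is_aut_K (p : {perm 'I_m}) : is_aut K p.
Proof. by apply/forallP => x; apply/forallP => y; rewrite aut_K. Qed.

Lemma fixK_ge (S : {set 'I_m}) : fixing_set K S -> m - 1 <= #|S|.
Proof.
move=> HS.
have : #|~: S| <= 1.
  apply/card_le1_eqP => x y; rewrite !inE => xS yS.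
  apply/eqP; apply/negPn/negP => xy.
  by move: (tperm_in HS (is_aut_K _) xy); rewrite (negbTE xS) (negbTE yS).
have := cardsC S; rewrite card_ord; lia.
Qed.

Lemma fixK_le : 0 < m -> fixnum K <= m - 1.
Proof.
move=> m0; pose x0 := Ordinal m0.
have <- : #|[set~ x0]| = m - 1 by rewrite cardsC1 card_ord subn1.
apply: fixnum_le; apply/forallP => p; apply/implyP => /andP [_ /forallP H].
have Hf : forall x, x != x0 -> p x = x by move=> x xn; apply/eqP; move: (H x); rewrite !inE xn.
apply/eqP/permP => x; rewrite perm1.
case: (eqVneq x x0) => [->|]; last exact: Hf.
case: (eqVneq (p x0) x0) => // Hn.
by move: (Hf _ Hn) => /perm_inj E; rewrite E eqxx in Hn.
Qed.

Lemma moved_sum (g : 'I_m -> 'I_m) (S : {set 'I_m + 'I_m}) (p q : {perm 'I_m}) :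
  fixing_set (functigraph K g) S -> (forall a, g (p a) = q (g a)) ->
  psum p q != 1%g ->
  exists c, ((inl c \in S) && (p c != c)) || ((inr c \in S) && (q c != c)).
Proof.
move=> HS Hg Hn.
have Ha := aut_sum (@aut_K m p) (@aut_K m q) Hg.
case: (moved HS Ha Hn) => [[c|c]] zS; rewrite permE /= => Hc; exists c.
- by rewrite zS /=; apply/orP; left; apply: contra Hc => /eqP ->.
- by rewrite zS /=; apply/orP; right; apply: contra Hc => /eqP ->.
Qed.

Lemma psum_nl (p q : {perm 'I_m}) a : p a != a -> psum p q != 1%g.
Proof.
move=> H; apply/eqP => /permP /(_ (inl a)); rewrite permE perm1 /= => [[E]].
by rewrite E eqxx in H.
Qed.

Lemma psum_nr (p q : {perm 'I_m}) a : q a != a -> psum p q != 1%g.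
Proof.
move=> H; apply/eqP => /permP /(_ (inr a)); rewrite permE perm1 /= => [[E]].
by rewrite E eqxx in H.
Qed.

Definition NA (S : {set 'I_m + 'I_m}) := [set a | inl a \notin S].
Definition NB (S : {set 'I_m + 'I_m}) := [set b | inr b \notin S].

Lemma cardS (S : {set 'I_m + 'I_m}) : #|S| + #|NA S| + #|NB S| = 2 * m.
Proof.
have E : ~: S = [set inl a | a in NA S] :|: [set inr b | b in NB S].
  apply/setP => [[a|b]]; rewrite !inE.
  - rewrite (mem_imset _ _ (@inl_inj _ _)) !inE.
    case: imsetP => [[b _ //]|_]; by rewrite orbF.
  - rewrite (mem_imset _ _ (@inr_inj _ _)) !inE.
    case: imsetP => [[a _ //]|_]; by [].
have D : [set inl a | a in NA S] :&: [set inr b | b in NB S] = set0.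
  apply/setP => z; rewrite !inE; apply/negP => /andP [/imsetP [a _ ->] /imsetP [b _ //]].
have := cardsC S; rewrite E cardsU D cards0 subn0 !card_imset; try by move=> ? ? [].
rewrite card_sum card_ord; lia.
Qed.

Definition Im (g : 'I_m -> 'I_m) := [set g x | x : 'I_m].

Lemma NA_inj g S : fixing_set (functigraph K g) S -> {in NA S &, injective g}.
Proof.
move=> HS a b; rewrite !inE => aS bS gab; apply/eqP/negPn/negP => ab.
have Hg : forall c, g (tperm a b c) = (1%g : {perm 'I_m}) (g c).
  by move=> c; rewrite perm1; case: tpermP => [->|->|] //; rewrite gab.
have Hn : psum (tperm a b) 1%g != 1%g by apply: (@psum_nl _ _ a); rewrite tpermL eq_sym.
case: (moved_sum HS Hg Hn) => c; rewrite perm1 eqxx andbF orbF => /andP [cS].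
by case: tpermP => [E|E|]; rewrite ?eqxx //; move: cS; rewrite E ?(negbTE aS) ?(negbTE bS).
Qed.

Lemma NB_out g S : fixing_set (functigraph K g) S -> #|NB S :\: Im g| <= 1.
Proof.
move=> HS; apply/card_le1_eqP => a b; rewrite !inE => /andP [aI aS] /andP [bI bS].
apply/eqP/negPn/negP => ab.
have Hg : forall c, g ((1%g : {perm 'I_m}) c) = tperm a b (g c).
  move=> c; rewrite perm1 tpermD //.
  - by apply: contra aI => /eqP ->; apply: imset_f.
  - by apply: contra bI => /eqP ->; apply: imset_f.
have Hn : psum 1%g (tperm a b) != 1%g.
  apply: (@psum_nr _ _ a).
  first [by rewrite tpermL | by rewrite tpermL eq_sym].
case: (moved_sum HS Hg Hn) => c; rewrite perm1 eqxx andbF /= => /andP [cS].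
by case: tpermP => [E|E|]; rewrite ?eqxx //; move: cS; rewrite E ?(negbTE aS) ?(negbTE bS).
Qed.

Lemma gen_bound g S : fixing_set (functigraph K g) S -> 2 * m <= #|S| + 2 * #|Im g| + 1.
Proof.
move=> HS.
have h1 : #|NA S| <= #|Im g|.
  rewrite -(card_in_imset (NA_inj HS)); apply: subset_leq_card.
  by apply/subsetP => x /imsetP [a _ ->]; rewrite imset_f.
have h2 := NB_out HS.
have h3 : #|NB S :&: Im g| <= #|Im g| by apply: subset_leq_card; apply: subsetIr.
have := cardsID (Im g) (NB S); have := cardS S; move=> A B; move: h1 h2 h3 A B.
set x1 := #|NA S|; set x2 := #|NB S|; set x3 := #|Im g|; set x4 := #|NB S :\: Im g|; set x5 := #|NB S :&: Im g|; set x0 := #|S|.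
clearbody x0 x1 x2 x3 x4 x5. lia.
Qed.

End Km.

Section Spec.
Variables s m : nat.
Hypotheses (Hs : 2 <= s) (Hm1 : s + 2 <= m) (Hm2 : m <= 2 * s).
Local Notation K := (complete_graph m).

Definition gv (i : nat) : nat := if i < s then i else if i < m.-1 then i - s else 0.

Lemma gv_lt i : i < m -> gv i < s.
Proof. rewrite /gv; repeat (case: ifP => ?); lia. Qed.

Lemma gv_small i : i < s -> gv i = i.
Proof. by rewrite /gv => ->. Qed.

Lemma gv_single i : i < m -> m - s - 1 <= gv i -> gv i = i.
Proof. rewrite /gv; repeat (case: ifP => ?); lia. Qed.

Lemma gv_fib i : s <= i < m.-1 -> gv i = i - s.
Proof. rewrite /gv; repeat (case: ifP => ?); lia. Qed.

Definition gs (i : 'I_m) : 'I_m := insubd i (gv i).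

Lemma val_gs i : val (gs i) = gv i.
Proof. by rewrite /gs val_insubd; have := gv_lt (ltn_ord i); have := ltn_ord i; case: ifP => //; lia. Qed.

Lemma Im_gs : Im gs = [set x : 'I_m | x < s].
Proof.
apply/setP => x; rewrite inE; apply/imsetP/idP => [[i _ ->]|xs].
  by rewrite val_gs gv_lt.
by exists x => //; apply: val_inj; rewrite val_gs gv_small.
Qed.

Lemma card_Im : #|Im gs| = s.
Proof. by rewrite Im_gs card_lt //; lia. Qed.


Lemma gs_single (a j : 'I_m) : m - s - 1 <= j -> gs a = j -> a = j.
Proof.
move=> hj /(congr1 val); rewrite val_gs => E; apply: val_inj.
by rewrite -E gv_single // E.
Qed.

Lemma gs_fix (j : 'I_m) : j < s -> gs j = j.
Proof. by move=> hj; apply: val_inj; rewrite val_gs gv_small. Qed.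

Lemma spec_lb S : fixing_set (functigraph K gs) S -> m - 1 <= #|S|.
Proof.
move=> HS.
pose D := [set j : 'I_m | [&& m - s - 1 <= j, j < s, inl j \notin S & inr j \notin S]].
have hD : #|D| <= 1.
  apply/card_le1_eqP => j j'; rewrite !inE => /and4P [j1 j2 j3 j4] /and4P [j1' j2' j3' j4'].
  apply/eqP/negPn/negP => jj.
  have Hg : forall c, gs (tperm j j' c) = tperm j j' (gs c).
    move=> c; case: tpermP => [->|->|cj cj'].
    - by rewrite !gs_fix // tpermL.
    - by rewrite !gs_fix // tpermR.
    rewrite tpermD //.
    - by apply/eqP => E; apply: cj; apply: gs_single.
    - by apply/eqP => E; apply: cj'; apply: gs_single.
  have Hn : psum (tperm j j') (tperm j j') != 1%g.
    apply: (@psum_nl _ _ _ j).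
    first [by rewrite tpermL | by rewrite tpermL eq_sym].
  case: (moved_sum HS Hg Hn) => c /orP [] /andP [cS];
  by case: tpermP => [E|E|]; rewrite ?eqxx //; move: cS; rewrite E ?(negbTE j3) ?(negbTE j4) ?(negbTE j3') ?(negbTE j4').
pose I := [set gs a | a in NA S].
have hI : #|I| = #|NA S| by rewrite card_in_imset //; exact: NA_inj HS.
have hU := NB_out HS.
pose H := NB S :&: Im gs.
pose X := [set x : 'I_m | x < m - s - 1].
have hX : #|X| = m - s - 1 by rewrite card_lt //; lia.
have sub : I :&: H \subset X :|: D.
  apply/subsetP => b; rewrite !inE => /andP [/imsetP [a aN ->] /andP [bN _]].
  case: (ltnP (gs a) (m - s - 1)) => [h|hk]; first by apply/orP; left.
  have E := gs_single hk (erefl _); rewrite -E.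
  have as_ : a < s by rewrite {1}E val_gs gv_lt.
  move: aN bN; rewrite !inE -E => aN bN.
  by rewrite /= as_ aN bN.
have sub2 : I :|: H \subset Im gs.
  apply/subsetP => b; rewrite !inE => /orP [/imsetP [a _ ->]|/andP [_ ->]] //.
  exact: imset_f.
have c1 := subset_leq_card sub; have c2 := subset_leq_card sub2.
have c3 := cardsUI X D; have c4 := cardsUI I H; have c5 := cardS S.
have c6 := cardsID (Im gs) (NB S).
rewrite card_Im in c2.
move: hD hI hU hX c1 c2 c3 c4 c5 c6.
set x1 := #|D|; set x2 := #|I|; set x3 := #|NA S|; set x4 := #|NB S :\: Im gs|.
set x5 := #|X|; set x6 := #|I :&: H|; set x7 := #|X :|: D|; set x8 := #|I :|: H|.
set x9 := #|H|; set x10 := #|X :&: D|; set x11 := #|S|; set x12 := #|NB S|.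
set x13 := #|NB S :&: Im gs|.
clearbody x1 x2 x3 x4 x5 x6 x7 x8 x9 x10 x11 x12 x13.
lia.
Qed.

Definition SA0 := [set a : 'I_m | (m - s - 1 <= a) && (a != s.-1 :> nat)].
Definition SB0 := [set b : 'I_m | s <= b < m.-1].
Definition S0 : {set 'I_m + 'I_m} := [set inl a | a in SA0] :|: [set inr b | b in SB0].

Lemma card_S0 : #|S0| = m - 1.
Proof.
have D : [set inl a | a in SA0] :&: [set inr b | b in SB0] = set0.
  apply/setP => z; rewrite !inE; apply/negP => /andP [/imsetP [a _ ->] /imsetP [b _ //]].
rewrite /S0 cardsU D cards0 subn0 !card_imset; try by move=> ? ? [].
have hs1 : s.-1 < m by lia.
have EA : SA0 = [set a : 'I_m | ~~ (a < m - s - 1)] :\ Ordinal hs1.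
  by apply/setP => a; rewrite !inE -leqNgt andbC.
have cA : #|[set a : 'I_m | ~~ (a < m - s - 1)]| = m - (m - s - 1).
  have -> : [set a : 'I_m | ~~ (a < m - s - 1)] = ~: [set a : 'I_m | a < m - s - 1].
    by apply/setP => a; rewrite !inE.
  have := cardsC [set a : 'I_m | a < m - s - 1]; rewrite card_lt ?card_ord; lia.
have cA' := cardsD1 (Ordinal hs1) [set a : 'I_m | ~~ (a < m - s - 1)].
rewrite !inE /= -EA in cA'.
have hin : ~~ (s.-1 < m - s - 1) by lia.
rewrite hin /= in cA'.
have EB : SB0 = [set b : 'I_m | b < m.-1] :\: [set b : 'I_m | b < s].
  by apply/setP => b; rewrite !inE -leqNgt andbC.
rewrite EB cardsDS ?card_lt.
- move: cA cA'; move: #|SA0| => u; move: #|[set a : 'I_m | ~~ (a < m - s - 1)]| => v; lia.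
- lia.
- lia.
by apply/subsetP => b; rewrite !inE => h; lia.
Qed.

Lemma S0_fix : fixing_set (functigraph K gs) S0.
Proof.
apply/forallP => p; apply/implyP => /andP [/forallP Ha /forallP Hf].
pose E := functigraph K gs.
have aut : forall x y, E (p x) (p y) = E x y.
  by move=> x y; move: (Ha x) => /forallP /(_ y) /eqP.
have fx : forall z, z \in S0 -> p z = z by move=> z zS; apply/eqP; exact: (implyP (Hf z)).
have fA : forall a, a \in SA0 -> p (inl a) = inl a.
  by move=> a aS; apply: fx; rewrite /S0 inE imset_f.
have fB : forall b, b \in SB0 -> p (inr b) = inr b.
  by move=> b bS; apply: fx; rewrite /S0 inE imset_f ?orbT.
have hsm : s < m by lia.
pose s' : 'I_m := Ordinal hsm.
have s'B : s' \in SB0 by rewrite inE /=; lia.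
have sideA : forall a, exists a', p (inl a) = inl a'.
  move=> a; case Ep: (p (inl a)) => [a'|b]; first by exists a'.
  exfalso; have := aut (inl a) (inr s'); rewrite Ep (fB s' s'B) /E /= /complete_graph.
  have -> : (gs a == s') = false.
    by apply/negP => /eqP /(congr1 val); rewrite val_gs /= => h; have := gv_lt (ltn_ord a); lia.
  move/negbT; rewrite negbK => /eqP bs.
  by move: Ep; rewrite bs -(fB s' s'B) => /perm_inj.
have sideB : forall b, exists b', p (inr b) = inr b'.
  move=> b; case Ep: (p (inr b)) => [a|b']; last by exists b'.
  exfalso; case: (eqVneq b s') => [bs|bs].
    by move: Ep; rewrite bs (fB s' s'B).
  have := aut (inr b) (inr s'); rewrite Ep (fB s' s'B) /E /= /complete_graph bs.
  by move/eqP => /(congr1 val); rewrite val_gs /= => h; have := gv_lt (ltn_ord a); lia.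
pose pa a := if p (inl a) is inl a' then a' else a.
pose pb b := if p (inr b) is inr b' then b' else b.
have pA : forall a, p (inl a) = inl (pa a).
  by move=> a; case: (sideA a) => a' Ep; rewrite /pa Ep.
have pB : forall b, p (inr b) = inr (pb b).
  by move=> b; case: (sideB b) => b' Ep; rewrite /pb Ep.
have injA : injective pa.
  by move=> a1 a2 h; have := pA a1; rewrite h -pA => /perm_inj [].
have injB : injective pb.
  by move=> a1 a2 h; have := pB a1; rewrite h -pB => /perm_inj [].
have fixA : forall a, a \in SA0 -> pa a = a.
  by move=> a /fA; rewrite pA => [[]].
have fixB : forall b, b \in SB0 -> pb b = b.
  by move=> b /fB; rewrite pB => [[]].
have R2 : forall a, gs (pa a) = pb (gs a).
  move=> a; have := aut (inl a) (inr (gs a)); rewrite pA pB /E /= eqxx.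
  by move/eqP.
have B1 : forall b : 'I_m, b < s.-1 -> pb b = b.
  move=> b hb.
  have [a aS ga] : exists2 a, a \in SA0 & gs a = b.
    case: (ltnP b (m - s - 1)) => hk.
      have hl : s + b < m by lia.
      exists (Ordinal hl); first by rewrite inE /=; lia.
      by apply: val_inj; rewrite val_gs /= gv_fib; lia.
    exists b; first by rewrite inE; lia.
    by apply: gs_fix; lia.
  by rewrite -ga -R2 fixA.
have hs1 : s.-1 < m by lia.
pose s1 : 'I_m := Ordinal hs1.
have B3 : pb s1 = s1.
  have gs1 : gs s1 = s1 by apply: gs_fix => /=; lia.
  have ylt : pb s1 < s by rewrite -gs1 -R2 val_gs gv_lt.
  case: (ltnP (pb s1) s.-1) => hy.
    by move/injB: (B1 _ hy).
  by apply: val_inj => /=; lia.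
have A1 : pa s1 = s1.
  apply: gs_single => /=; first lia.
  by rewrite R2 gs_fix ?B3 //= ; lia.
have A2 : forall a, pa a = a.
  move=> a; case: (boolP (a \in SA0)) => [/fixA //|].
  rewrite inE negb_and -ltnNge negbK => /orP [hk|/eqP hs].
  - have hx : gs (pa a) = a by rewrite R2 gs_fix ?B1 //; lia.
    case: (boolP (pa a \in SA0)) => [/fixA h|].
      by apply: injA; rewrite h.
    rewrite inE negb_and -ltnNge negbK => /orP [hx'|/eqP hx'].
    + by rewrite -[RHS]hx gs_fix //; lia.
    + have : pa a = pa s1 by rewrite A1; apply: val_inj.
      by move/injA => ->; rewrite A1.
  - have -> : a = s1 by apply: val_inj.
    exact: A1.
have B4 : forall b, pb b = b.
  have Hne : forall b : 'I_m, b != m.-1 :> nat -> pb b = b.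
    move=> b hb; case: (ltnP b s.-1) => [/B1 //|h1].
    case: (ltnP b s) => h2.
      by have -> : b = s1 by apply: val_inj => /=; lia.
    by apply: fixB; rewrite inE; have := ltn_ord b; lia.
  move=> b; case: (eqVneq (val b) m.-1) => hb; last exact: Hne.
  case: (eqVneq (val (pb b)) m.-1) => hy.
    by apply: val_inj; rewrite hy hb.
  by move/injB: (Hne _ hy).
apply/eqP/permP => [[a|b]]; rewrite perm1.
- by rewrite pA A2.
- by rewrite pB B4.
Qed.
End Spec.

Lemma fixK m : 0 < m -> fixnum (complete_graph m) = m - 1.
Proof.
move=> m0; apply/eqP; rewrite eqn_leq fixK_le //=.
by case: (fixnum_wit (complete_graph m)) => S HS <-; apply: fixK_ge.
Qed.

Unset Implicit Arguments.
Theorem proposition3p5 (s : nat) : 2 <= s ->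
  forall m : nat, s + 2 <= m ->
    ((exists g : 'I_m -> 'I_m,
        #|[set g x | x : 'I_m]| = s /\
        fixnum (complete_graph m) = fixnum (functigraph (complete_graph m) g))
     <-> m <= 2 * s).
Proof.
move=> Hs m Hm1; have m0 : 0 < m by lia.
split.
- case=> g [Hc He]; rewrite fixK // in He.
  case: (fixnum_wit (functigraph (complete_graph m) g)) => S HS HSc.
  have := gen_bound HS; rewrite /Im Hc HSc -He.
  case: (leqP m (2 * s)) => // h; lia.
- move=> Hm2; exists (gs s (m:=m)); split; first exact: (card_Im Hs Hm1 Hm2).
  rewrite fixK //; apply/eqP; rewrite eqn_leq; apply/andP; split.
  + by case: (fixnum_wit (functigraph (complete_graph m) (gs s (m:=m)))) => S HS <-;
      apply: (spec_lb Hs Hm1 Hm2).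
  + by rewrite -(card_S0 Hs Hm1 Hm2); apply: fixnum_le; exact: (S0_fix Hs Hm1 Hm2).
Qed.
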